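(* Fix $t\in\{0,\dots,T\}$ and a $\mathcal F_t$-measurable random vector $\zeta_t:\Omega\to\mathbb R^d$. Then $$\zeta_t\in -K_t\quad \mathcal P\text{-q.s.}\qquad\Longleftrightarrow\qquad \langle \zeta_t, X_t\rangle\le 0\quad \overline{\mathcal P}\text{-q.s.}$$ Consequently, an $\mathbb F$-adapted process $\eta=(\eta_t)_{0\le t\le T}$ is an admissible trading strategy (i.e. $\eta\in\mathcal A$) if and only if $\langle\eta_t,X_t\rangle\le 0$ $\overline{\mathcal P}$-q.s. for all $t\le T$.
   Context: Abstract setting: $(\Omega,\mathcal F)$ is a measurable space with two filtrations $\mathbb F^0=(\mathcal F^0_t)_{t=0,\dots,T}\subset\mathbb F=(\mathcal F_t)_{t=0,\dots,T}$, $T\in\mathbb N$, and $\mathcal P$ is an arbitrary nonempty family of probability measures on $(\Omega,\mathcal F)$. A set is $\mathcal P$-polar if it is contained in a universally measurable set which is null under every $\mathbb P\in\mathcal P$; ''$\mathcal P$-q.s.'' means outside a $\mathcal P$-polar set. Let $d\ge 2$ and $\langle x,y\rangle=\sum_i x^iy^i$. For each $t$, $K_t:\Omega\to 2^{\mathbb R^d}$ is an $\mathcal F^0_t$-measurable random set such that each $K_t(\omega)$ is a closed convex cone containing $\mathbb R^d_+$; $K_t^*(\omega):=\{y\in\mathbb R^d:\langle x,y\rangle\ge0\ \forall x\in K_t(\omega)\}$ and $K_t^{*,0}(\omega):=\{y\in K^*_t(\omega): y^d=1\}$. Standing assumptions: $K_t^*(\omega)\cap\partial\mathbb R^d_+=\{0\}$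 and $\mathrm{int}K^*_t(\omega)\neq\emptyset$ for all $\omega,t$; $S$ is an $\mathbb F^0$-adapted process with $S_t(\omega)\in K^{*,0}_t(\omega)\cap\mathrm{int}K^*_t(\omega)$ for all $\omega,t$; and there is a constant $c>1$ such that $c^{-1}S^i_t(\omega)\le y^i\le cS^i_t(\omega)$ for all $i\le d-1$, $y\in K^{*,0}_t(\omega)$, $\omega$, $t$. An $\mathbb F$-adapted process $\eta$ is an admissible trading strategy ($\eta\in\mathcal A$) if $\eta_t\in -K_t$ $\mathcal P$-q.s. for all $t\le T$. Enlargement: $\Lambda_1:=[c^{-1},c]^{d-1}$, $\Lambda:=(\Lambda_1)^{T+1}$ with elements $\theta=(\theta_0,\dots,\theta_T)$, $\mathcal F^\Lambda_T$ its Borel $\sigma$-field, $\overline\Omega:=\Omega\times\Lambda$, $\overline{\mathcal F}:=\mathcal F\otimes\mathcal F^\Lambda_T$. For $\bar\omega=(\omega,\theta)$, $X_t(\bar\omega):=\Pi_{K^{*,0}_t(\omega)}[S_t(\omega)\theta_t]$, where $S_t(\omega)\theta_t:=(S^1_t(\omega)\theta^1_t,\dots,S^{d-1}_t(\omega)\theta^{d-1}_t,S^d_t(\omega))$ and $\Pi_C$ is the Euclidean projection onto the closed convex set $C$. $\overline{\mathcal P}:=\{\overline{\mathbb P}$ probability on $(\overline\Omega,\overline{\mathcal F})$ with $\overline{\mathbb P}|_\Omega\in\mathcal P\}$. *)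

(* Defs.v *)
From mathcomp Require Import all_boot all_order all_algebra.
From mathcomp Require Import all_classical all_reals all_analysis.
Import numFieldNormedType.Exports.
Set Implicit Arguments.
Unset Strict Implicit.
Unset Printing Implicit Defensive.
Import Order.TTheory GRing.Theory Num.Theory.
Local Open Scope classical_set_scope.
Local Open Scope ring_scope.

Section Defs.
Variable R : realType.

Definition dotv (d : nat) (x y : 'rV[R]_d) : R := \sum_(i < d) x 0 i * y 0 i.

Definition is_proj (d : nat) (C : set 'rV[R]_d) (x y : 'rV[R]_d) : Prop :=
  C y /\ forall z, C z -> dotv (x - y) (x - y) <= dotv (x - z) (x - z).
Definition proj (d : nat) (C : set 'rV[R]_d) (x : 'rV[R]_d) : 'rV[R]_d :=
  xget 0 [set y | is_proj C x y].

Definition orthant (d : nat) : set 'rV[R]_d := [set x | forall i, 0 <= x 0 i].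
Definition orthant_boundary (d : nat) : set 'rV[R]_d :=
  [set x | (forall i, 0 <= x 0 i) /\ exists i, x 0 i = 0].
Definition convex_cone (d : nat) (K : set 'rV[R]_d) : Prop :=
  K 0 /\ (forall x y, K x -> K y -> K (x + y)) /\
  (forall (a : R) x, 0 <= a -> K x -> K (a *: x)).
Definition dual_cone (d : nat) (K : set 'rV[R]_d) : set 'rV[R]_d :=
  [set y | forall x, K x -> 0 <= dotv x y].
(* K^{*,0} = { y in K^* : y^d = 1 } (last coordinate, index d-1, equals 1) *)
Definition dual_cone0 (d : nat) (K : set 'rV[R]_d) : set 'rV[R]_d :=
  [set y | dual_cone K y /\ forall i : 'I_d, val i = d.-1 -> y 0 i = 1].

Definition Stheta (d : nat) (s : 'rV[R]_d) (th : (d.-1).-tuple R) : 'rV[R]_d :=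
  \row_i (if (val i < d.-1)%N then s 0 i * nth 0 (tval th) i else s 0 i).

Definition meas_wrt (T : Type) (G : set (set T)) (f : T -> R) : Prop :=
  forall B : set R, measurable B -> G (f @^-1` B).
Definition meas_wrt_vec (T : Type) (d : nat) (G : set (set T))
  (f : T -> 'rV[R]_d) : Prop :=
  forall i : 'I_d, meas_wrt G (fun w => f w 0 i).
Definition meas_random_set (T : Type) (d : nat) (G : set (set T))
  (K : T -> set 'rV[R]_d) : Prop :=
  forall O : set 'rV[R]_d, open O -> G [set w | K w `&` O !=set0].

(* A is universally measurable: measurable for the completion of every
   probability measure on the space. *)
Definition univ_measurable (dT : measure_display) (T : measurableType dT)
  (A : set T) : Prop :=
  forall P : probability T R, exists B C : set T,
    [/\ measurable B, measurable C, B `<=` A, A `<=` C & P (C `\` B) = 0%E].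
Definition null_set (dT : measure_display) (T : measurableType dT)
  (P : probability T R) (A : set T) : Prop :=
  exists C : set T, [/\ measurable C, A `<=` C & P C = 0%E].
Definition polar (dT : measure_display) (T : measurableType dT)
  (Ps : set (probability T R)) (N : set T) : Prop :=
  exists A : set T, [/\ N `<=` A, univ_measurable A &
    forall P, Ps P -> null_set P A].
Definition qs (dT : measure_display) (T : measurableType dT)
  (Ps : set (probability T R)) (Q : T -> Prop) : Prop :=
  polar Ps [set w | ~ Q w].

(* Lambda is realised inside the product-Borel space
   L := ((d-1)-tuples of reals)^(T+1); Lambda = ([c^-1, c]^(d-1))^(T+1). *)
Definition Lspace (T d : nat) := (T.+1).-tuple ((d.-1).-tuple R).
Definition Lambda (T d : nat) (c : R) : set (Lspace T d) :=
  [set th | forall (t : 'I_T.+1) (i : 'I_(d.-1)),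
     c^-1 <= tnth (tnth th t) i <= c].
(* bar P: probabilities on Omega x Lambda whose Omega-marginal is in Ps *)
Definition Pbar (dO : measure_display) (Om : measurableType dO) (T d : nat)
  (c : R) (Ps : set (probability Om R)) :
  set (probability (Om * Lspace T d)%type R) :=
  [set Q | (exists2 P, Ps P &
              forall A : set Om, measurable A -> Q (A `*` setT) = P A)
           /\ Q (setT `*` @Lambda T d c) = 1%E].

Definition Xproc (dO : measure_display) (Om : measurableType dO) (T d : nat)
  (K : 'I_T.+1 -> Om -> set 'rV[R]_d) (S : 'I_T.+1 -> Om -> 'rV[R]_d)
  (t : 'I_T.+1) (w : (Om * Lspace T d)%type) : 'rV[R]_d :=
  proj (dual_cone0 (K t w.1)) (Stheta (S t w.1) (tnth w.2 t)).

Definition filtration (dO : measure_display) (Om : measurableType dO) (T : nat)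
  (G : 'I_T.+1 -> set (set Om)) : Prop :=
  (forall t, sigma_algebra setT (G t)) /\
  (forall t, G t `<=` measurable) /\
  (forall s t : 'I_T.+1, (s <= t)%N -> G s `<=` G t).

Definition adapted (Om : Type) (T d : nat) (G : 'I_T.+1 -> set (set Om))
  (eta : 'I_T.+1 -> Om -> 'rV[R]_d) : Prop :=
  forall t, meas_wrt_vec (G t) (eta t).

Definition admissible (dO : measure_display) (Om : measurableType dO) (T d : nat)
  (Ps : set (probability Om R)) (K : 'I_T.+1 -> Om -> set 'rV[R]_d)
  (eta : 'I_T.+1 -> Om -> 'rV[R]_d) : Prop :=
  forall t, qs Ps (fun w => K t w (- eta t w)).

Definition cone_assumptions (Om : Type) (T d : nat)
  (F0 : 'I_T.+1 -> set (set Om)) (K : 'I_T.+1 -> Om -> set 'rV[R]_d) : Prop :=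
  forall t,
    meas_random_set (F0 t) (K t) /\
    forall w, [/\ closed (K t w), convex_cone (K t w), @orthant d `<=` K t w,
                  dual_cone (K t w) `&` @orthant_boundary d = [set 0] &
                  (dual_cone (K t w))° !=set0].

Definition price_assumptions (Om : Type) (T d : nat)
  (F0 : 'I_T.+1 -> set (set Om)) (K : 'I_T.+1 -> Om -> set 'rV[R]_d)
  (S : 'I_T.+1 -> Om -> 'rV[R]_d) (c : R) : Prop :=
  adapted F0 S /\
  (forall t w, dual_cone0 (K t w) (S t w) /\ (dual_cone (K t w))° (S t w)) /\
  1 < c /\
  (forall t w (y : 'rV[R]_d) (i : 'I_d), (val i < d.-1)%N ->
     dual_cone0 (K t w) y -> c^-1 * S t w 0 i <= y 0 i <= c * S t w 0 i).

End Defs.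
Arguments Lambda {R} T d c.
Arguments Pbar {R dO Om} T d c Ps.

(* Main.v *)
Require Import Defs.
From HB Require Import structures.
From mathcomp Require Import all_boot all_order all_algebra.
From mathcomp Require Import all_classical all_reals all_analysis.
From mathcomp Require Import ring lra.
Import numFieldNormedType.Exports.
Import Order.TTheory GRing.Theory Num.Theory.
Local Open Scope classical_set_scope.
Local Open Scope ring_scope.

Section Alg.
Variable R : realType.
Variable d : nat.
Implicit Types x y z u v : 'rV[R]_d.

Lemma mul_self_ge0 (a : R) : 0 <= a * a.
Proof. by rewrite -expr2 sqr_ge0. Qed.

Lemma dotvC x y : dotv x y = dotv y x.
Proof. by rewrite /dotv; apply: eq_bigr => i _; rewrite mulrC. Qed.

Lemma dotvDr x y z : dotv x (y + z) = dotv x y + dotv x z.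
Proof. by rewrite /dotv -big_split /=; apply: eq_bigr => i _; rewrite mxE mulrDr. Qed.

Lemma dotvBr x y z : dotv x (y - z) = dotv x y - dotv x z.
Proof.
rewrite /dotv -sumrB /=; apply: eq_bigr => i _; rewrite !mxE; ring.
Qed.

Lemma dotvZr a x y : dotv x (a *: y) = a * dotv x y.
Proof. by rewrite /dotv mulr_sumr; apply: eq_bigr => i _; rewrite mxE; ring. Qed.

Lemma dotvNr x y : dotv x (- y) = - dotv x y.
Proof. by rewrite /dotv -sumrN; apply: eq_bigr => i _; rewrite mxE; ring. Qed.

Lemma dotv0r x : dotv x 0 = 0.
Proof. by rewrite /dotv big1 // => i _; rewrite mxE mulr0. Qed.

Lemma dotv_ge0 x : 0 <= dotv x x.
Proof. by rewrite /dotv sumr_ge0 // => i _; rewrite mul_self_ge0. Qed.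

Lemma dotv_eq0 x : dotv x x = 0 -> x = 0.
Proof.
move=> h; apply/rowP => i; rewrite mxE.
have : 0 <= x 0 i * x 0 i <= dotv x x.
  rewrite mul_self_ge0 /dotv (bigD1 i) //= lerDl sumr_ge0 // => j _.
  by rewrite mul_self_ge0.
rewrite h => /andP[h1 h2]; have : x 0 i * x 0 i = 0 by apply/eqP; rewrite eq_le h1 h2.
by move/eqP; rewrite mulf_eq0 orbb => /eqP.
Qed.

Lemma dotv_term x i : x 0 i * x 0 i <= dotv x x.
Proof.
rewrite /dotv (bigD1 i) //= lerDl sumr_ge0 // => j _; exact: mul_self_ge0.
Qed.

Lemma cont_sum n (F : 'I_n -> 'rV[R]_d -> R) :
  (forall i, continuous (F i)) -> continuous (fun z => \sum_(i < n) F i z).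
Proof.
elim: n F => [|n IH] F hF.
  have -> : (fun z => \sum_(i < 0) F i z) = fun=> 0.
    by apply: funext => z; rewrite big_ord0.
  exact: cst_continuous.
have -> : (fun z => \sum_(i < n.+1) F i z) =
   (fun z => \sum_(i < n) F (widen_ord (leqnSn n) i) z) + F ord_max.
  by apply: funext => z; rewrite big_ord_recr.
move=> z; apply: continuousD; last exact: hF.
by apply: (IH (fun i => F (widen_ord (leqnSn n) i))) => i; exact: hF.
Qed.

Lemma coord_cont i : continuous (fun z : 'rV[R]_d => z 0 i).
Proof. exact: coord_continuous. Qed.

Lemma cont_dist x : continuous (fun z => dotv (x - z) (x - z)).
Proof.
apply: cont_sum => i z.
have hc : {for z, continuous (fun z : 'rV[R]_d => (x - z) 0 i)}.
  have -> : (fun z : 'rV[R]_d => (x - z) 0 i) = (fun=> x 0 i) - (fun z => z 0 i).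
    by apply: funext => w; rewrite !mxE.
  by apply: continuousB; [exact: cst_continuous| exact: coord_cont].
exact: (continuousM hc hc).
Qed.

Lemma cont_dot x : continuous (fun z => dotv x z).
Proof.
apply: cont_sum => i z.
have h1 : {for z, continuous (fun _ : 'rV[R]_d => x 0 i)}.
  exact: cst_continuous.
by have := continuousM h1 (coord_cont i z).
Qed.

Lemma argmin_box (C : set 'rV[R]_d) x (lo hi : 'I_d -> R) :
  C !=set0 -> closed C -> (forall z, C z -> forall i, lo i <= z 0 i <= hi i) ->
  exists2 p, C p & forall z, C z -> dotv (x - p) (x - p) <= dotv (x - z) (x - z).
Proof.
move=> C0 Ccl Cb.
have Cc : compact C.
  have Bc : compact [set v : 'rV[R]_d | forall i, `[lo i, hi i]%classic (v ord0 i)].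
    by apply: (@rV_compact _ _ (fun i => `[lo i, hi i]%classic)) => i; exact: segment_compact.
  apply: (subclosed_compact Ccl Bc) => v /Cb h i /=.
  by rewrite in_itv /=; exact: h.
have [p pC hp] := EVT_min_rV C0 Cc (continuous_subspaceT (cont_dist x)).
exists p; first by move: pC; rewrite inE.
by move=> z Cz; apply: hp; rewrite inE.
Qed.

End Alg.
Section Cone.
Variable R : realType.
Variable d : nat.
Implicit Types x y z u v : 'rV[R]_d.

Lemma dotv_expand (a : 'rV[R]_d) (t : R) (k : 'rV[R]_d) : dotv (a + t *: k) (a + t *: k) =
  dotv a a + 2 * t * dotv a k + t ^+ 2 * dotv k k.
Proof.
rewrite /dotv !mulr_sumr -!big_split /=; apply: eq_bigr => i _; rewrite !mxE; ring.
Qed.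

Lemma small_le0 (a b : R) : 0 <= b -> (forall t, 0 < t -> t < 1 -> a <= t * b) -> a <= 0.
Proof.
move=> b0 h; rewrite leNgt; apply/negP => a0.
set D := 2 * (b + a + 1).
have D0 : 0 < D by rewrite /D; lra.
set t := a / D.
have t0 : 0 < t by rewrite /t divr_gt0.
have t1 : t < 1 by rewrite /t ltr_pdivrMr // /D; lra.
have e : t * D = a by rewrite /t divfK // gt_eqF.
have := h t t0 t1.
rewrite -(ler_pM2r D0) => H.
have e2 : t * b * D = a * b by rewrite -e; ring.
rewrite e2 in H.
rewrite /D in H; nra.
Qed.

Definition evec (i : 'I_d) : 'rV[R]_d := \row_j (j == i)%:R.

Lemma dotv_evec i y : dotv (evec i) y = y 0 i.
Proof.
rewrite /dotv (bigD1 i) //= big1 ?addr0; first by rewrite mxE eqxx mul1r.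
by move=> j /negPf ji; rewrite mxE ji mul0r.
Qed.

Lemma dual_ge0 (K : set 'rV[R]_d) y : @orthant R d `<=` K -> dual_cone K y ->
  forall i, 0 <= y 0 i.
Proof.
move=> oK hy i; rewrite -dotv_evec; apply: hy; apply: oK => j.
by rewrite mxE; case: (j == i).
Qed.

Lemma closed_K0 (K : set 'rV[R]_d) : closed (dual_cone0 K).
Proof.
have -> : dual_cone0 K = \bigcap_(x in K) ((fun y => dotv x y) @^-1` [set r | 0 <= r])
   `&` \bigcap_(i in [set: 'I_d]) ((fun y : 'rV[R]_d => y 0 i) @^-1`
        [set r | val i = d.-1 -> r = 1]).
  apply/seteqP; split.
    by move=> y [h1 h2]; split => [x Kx|i _ /=]; [exact: h1|exact: h2].
  by move=> y [h1 h2]; split => [x Kx|i hi]; [exact: h1|exact: h2].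
apply: closedI; apply: closed_bigI => i _.
  by move: (@cont_dot R d i) => /continuous_closedP; apply; exact: closed_ge.
move: (@coord_cont R d i) => /continuous_closedP; apply.
case: (boolP (val i == d.-1)) => [/eqP h|h].
  have -> : [set r : R | val i = d.-1 -> r = 1] = [set r | r = 1].
    by apply/seteqP; split => r /=; [move=> H; exact: H|move=> ->].
  exact: closed_eq.
have -> : [set r : R | val i = d.-1 -> r = 1] = setT.
  by apply/seteqP; split => r //= _ hi; move/eqP: h.
exact: closedT.
Qed.

Lemma bipolar (K : set 'rV[R]_d) x : closed K -> convex_cone K ->
  (forall y, dual_cone K y -> 0 <= dotv x y) -> K x.
Proof.
move=> Kcl [K0 [KD KZ]] hx.
set D := dotv x x.
set C := K `&` [set z | dotv (x - z) (x - z) <= D].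
have C0 : C !=set0 by exists 0; split => //=; rewrite subr0 /D.
have Ccl : closed C.
  apply: closedI => //.
  change (closed ((fun z => dotv (x - z) (x - z)) @^-1` [set r | r <= D])).
  by move: (@cont_dist R d x) => /continuous_closedP; apply; exact: closed_le.
have Cb : forall z, C z -> forall i, - (`|x 0 i| + D + 1) <= z 0 i <= `|x 0 i| + D + 1.
  move=> z [_ /= hz] i.
  have h1 := @dotv_term R d (x - z) i; rewrite !mxE in h1.
  have h2 : (x 0 i - z 0 i) * (x 0 i - z 0 i) <= D by exact: le_trans h1 hz.
  have h3 := ler_norm (x 0 i); have h4 : - `|x 0 i| <= x 0 i.
    by rewrite lerNl -normrN ler_norm.
  have [h5 h6] : x 0 i - z 0 i <= (x 0 i - z 0 i) * (x 0 i - z 0 i) + 1 /\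
     - (x 0 i - z 0 i) <= (x 0 i - z 0 i) * (x 0 i - z 0 i) + 1.
    by move: (x 0 i - z 0 i) => u; split; nra.
  apply/andP; split; lra.
have [p Cp hp] := @argmin_box R d C x (fun i => - (`|x 0 i| + D + 1))
   (fun i => `|x 0 i| + D + 1) C0 Ccl Cb.
have hK : forall z, K z -> dotv (x - p) (x - p) <= dotv (x - z) (x - z).
  move=> z Kz; have [le|lt] := leP (dotv (x - z) (x - z)) D.
    by apply: hp; split.
  by apply: le_trans (ltW lt); case: Cp.
set a := x - p.
have Kp : K p by case: Cp.
have ha : forall k, K k -> dotv a k <= 0.
  move=> k Kk.
  apply: (@small_le0 _ (dotv k k / 2)).
    by rewrite divr_ge0 // dotv_ge0.
  move=> t t0 t1.
  have := hK (p + t *: k) (KD _ _ Kp (KZ _ _ (ltW t0) Kk)).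
  have -> : x - (p + t *: k) = a + (- t) *: k by rewrite /a scaleNr opprD addrA.
  rewrite dotv_expand => h.
  have : 2 * t * dotv a k <= t ^+ 2 * dotv k k by lra.
  move=> h'; rewrite -(ler_pM2l (_ : 0 < 2 * t)); last by lra.
  by apply: (le_trans h'); rewrite le_eqVlt; apply/orP; left; apply/eqP; field.
have hp0 : 0 <= dotv a p.
  rewrite -(opprK (dotv a p)) oppr_ge0.
  apply: (@small_le0 _ (dotv p p / 2)).
    by rewrite divr_ge0 // dotv_ge0.
  move=> t t0 t1.
  have t1' : 0 <= 1 - t by lra.
  have := hK ((1 - t) *: p) (KZ _ _ t1' Kp).
  have -> : x - (1 - t) *: p = a + t *: p.
    by rewrite /a scalerBl scale1r opprB addrA addrAC.
  rewrite dotv_expand => h.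
  have h' : - (2 * t * dotv a p) <= t ^+ 2 * dotv p p by lra.
  rewrite -(ler_pM2l (_ : 0 < 2 * t)); last by lra.
  have e1 : 2 * t * (- dotv a p) = - (2 * t * dotv a p) by ring.
  have e2 : 2 * t * (t * (dotv p p / 2)) = t ^+ 2 * dotv p p by field.
  by rewrite e1 e2.
have hd : dual_cone K (p - x).
  move=> k Kk; rewrite -opprB dotvNr oppr_ge0 dotvC; exact: ha.
have h1 := hx _ hd.
rewrite -opprB dotvNr oppr_ge0 in h1.
have haa : dotv a a <= 0.
  have -> : dotv a a = dotv a x - dotv a p.
    by rewrite -dotvBr.
  by rewrite dotvC; lra.
have a0 : a = 0 by apply: dotv_eq0; apply/eqP; rewrite eq_le haa dotv_ge0.
have -> : x = p by apply/eqP; rewrite -subr_eq0 -/a a0.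
exact: Kp.
Qed.

End Cone.
Section Det.
Variable R : realType.
Variable d : nat.
Hypothesis d2 : (2 <= d)%N.
Variable K : set 'rV[R]_d.
Variable s : 'rV[R]_d.
Variable c : R.
Hypothesis Kcl : closed K.
Hypothesis Kcc : convex_cone K.
Hypothesis hor : @orthant R d `<=` K.
Hypothesis hbd : dual_cone K `&` @orthant_boundary R d = [set 0].
Hypothesis hs : dual_cone0 K s.
Hypothesis hc : 1 < c.
Hypothesis hbound : forall (y : 'rV[R]_d) (i : 'I_d), (val i < d.-1)%N ->
  dual_cone0 K y -> c^-1 * s 0 i <= y 0 i <= c * s 0 i.

Local Notation K0 := (dual_cone0 K).

Lemma il_lt : (d.-1 < d)%N.
Proof. by case: d d2. Qed.
Let il : 'I_d := Ordinal il_lt.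

Lemma s_ge0 i : 0 <= s 0 i.
Proof. by apply: (@dual_ge0 R d K _ hor); case: hs. Qed.

Lemma notlast (i : 'I_d) : ~~ (val i < d.-1)%N -> val i = d.-1.
Proof.
move=> h; apply/eqP; rewrite eqn_leq (leqNgt d.-1) h andbT -ltnS prednK ?ltn_ord //.
exact: leq_trans d2.
Qed.

Lemma proj_spec v : is_proj K0 v (Defs.proj K0 v).
Proof.
rewrite /Defs.proj; apply: xgetPex.
have K0n : K0 !=set0 by exists s.
have := @argmin_box R d K0 v (fun=> 0) (fun i => c * s 0 i + 1) K0n (@closed_K0 R d K).
case.
  move=> z Kz i; apply/andP; split.
    by apply: (@dual_ge0 R d K _ hor); case: Kz.
  case: (boolP (val i < d.-1)%N) => h.
    by have /andP[_ h2] := hbound _ _ h Kz; apply: (le_trans h2); lra.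
  case: Kz => _ /(_ i (notlast i h)) ->.
  have := s_ge0 i; have c0 : 0 < c := lt_trans ltr01 hc.
  by move=> hs0; rewrite lerDr mulr_ge0 // ltW.
by move=> p Kp hp; exists p; split.
Qed.

Lemma proj_in v : K0 (Defs.proj K0 v).
Proof. by case: (proj_spec v). Qed.

Lemma dir1 z v : K (- z) -> dotv z (Defs.proj K0 v) <= 0.
Proof.
move=> h; have [hd _] := proj_in v.
by have := hd _ h; rewrite dotvC dotvNr oppr_ge0 dotvC.
Qed.

Lemma K0_nonpos z : (forall y, K0 y -> dotv z y <= 0) -> K (- z).
Proof.
move=> h; apply: (@bipolar R d K) => // y hy.
rewrite dotvC dotvNr oppr_ge0 dotvC.
have yge := @dual_ge0 R d K _ hor hy.
have [e|ne] := eqVneq (y 0 il) 0.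
  have : (dual_cone K `&` @orthant_boundary R d) y by split => //; split => //; exists il.
  by rewrite hbd => ->; rewrite dotv0r.
have yp : 0 < y 0 il by rewrite lt_def ne yge.
set y' := (y 0 il)^-1 *: y.
have Ky' : K0 y'.
  split.
    move=> x Kx; rewrite dotvZr mulr_ge0 // ?invr_ge0 ?(ltW yp) //; exact: hy.
  move=> i hi; have -> : i = il by apply: val_inj.
  by rewrite mxE mulVf.
have -> : y = y 0 il *: y' by rewrite /y' scalerA mulfV // scale1r.
by rewrite dotvZr; apply: mulr_ge0_le0; [exact: ltW|exact: h].
Qed.

Lemma le0_eps (a : R) : (forall e, 0 < e -> a <= e) -> a <= 0.
Proof.
move=> h; rewrite leNgt; apply/negP => a0.
have := h (a / 2) (divr_gt0 a0 (ltr0Sn _ 1)); lra.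
Qed.

Lemma dotv_tri (u w : 'rV[R]_d) : dotv (u - w) (u - w) <= 2 * dotv u u + 2 * dotv w w.
Proof.
rewrite /dotv !mulr_sumr -big_split /=; apply: ler_sum => i _; rewrite !mxE.
move: (u 0 i) (w 0 i) => p q; have := sqr_ge0 (p + q); rewrite expr2; nra.
Qed.

Lemma dotv_amgm (z w : 'rV[R]_d) (l : R) : 0 < l ->
  2 * dotv z w <= l * dotv z z + l^-1 * dotv w w.
Proof.
move=> l0; rewrite /dotv !mulr_sumr -big_split /=; apply: ler_sum => i _.
rewrite -subr_ge0.
have -> : l * (z 0 i * z 0 i) + l^-1 * (w 0 i * w 0 i) - 2 * (z 0 i * w 0 i)
   = l^-1 * ((l * z 0 i - w 0 i) * (l * z 0 i - w 0 i)).
  by field; rewrite gt_eqF.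
by rewrite mulr_ge0 // ?invr_ge0 ?(ltW l0) // -expr2 sqr_ge0.
Qed.

Lemma approx_main z (Th : nat -> (d.-1).-tuple R) :
  (forall f : 'I_d -> R, (forall i, (val i < d.-1)%N -> c^-1 <= f i <= c) ->
     forall del, 0 < del -> exists n, forall i : 'I_d, (val i < d.-1)%N ->
       `|nth 0 (tval (Th n)) i - f i| <= del) ->
  (forall n, dotv z (Defs.proj K0 (Stheta s (Th n))) <= 0) ->
  K (- z).
Proof.
move=> dens hn; apply: K0_nonpos => y Ky.
apply: le0_eps => e e0.
set f := fun i : 'I_d => if s 0 i == 0 then 1 else y 0 i / s 0 i.
have hf : forall i, (val i < d.-1)%N -> c^-1 <= f i <= c.
  move=> i hi; rewrite /f; case: eqP => [_|/eqP sn0].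
    have c0 : 0 < c := lt_trans ltr01 hc.
    by rewrite invf_le1 // ltW.
  have sp : 0 < s 0 i by rewrite lt_def sn0 s_ge0.
  have /andP[h1 h2] := hbound _ _ hi Ky.
  by rewrite ler_pdivlMr // ler_pdivrMr // h1 h2.
have hsf : forall i, (val i < d.-1)%N -> s 0 i * f i = y 0 i.
  move=> i hi; rewrite /f; case: eqP => [s0|/eqP sn0]; last by rewrite mulrC divfK.
  have /andP[h1 h2] := hbound _ _ hi Ky; rewrite s0 !mulr0 in h1 h2 *; lra.
set Z := dotv z z.
set A := dotv s s.
have Z0 : 0 <= Z := @dotv_ge0 R d z.
have A0 : 0 <= A := @dotv_ge0 R d s.
set l := e / (Z + 1).
have l0 : 0 < l by rewrite divr_gt0 //; lra.
have lZ : l * Z <= e.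
  rewrite /l mulrAC ler_pdivrMr; last by lra.
  by rewrite ler_pM2l //; lra.
set del := Num.min 1 (e * l / (4 * (A + 1))).
have del0 : 0 < del.
  have el : 0 < e * l := mulr_gt0 e0 l0.
  have A4 : 0 < 4 * (A + 1) by lra.
  by rewrite /del lt_min ltr01 /= divr_gt0.
have del1 : del <= 1 by rewrite /del ge_min lexx.
have del2 : del <= e * l / (4 * (A + 1)) by rewrite /del ge_min lexx orbT.
have hdA : 4 * (del * del) * A <= e * l.
  have : del * del <= e * l / (4 * (A + 1)).
    apply: le_trans del2; rewrite -[leRHS]mul1r ler_pM2r //; exact: del1.
  rewrite ler_pdivlMr; last by lra.
  move=> h; have el0 : 0 < e * l by rewrite mulr_gt0.
  nra.
have [n hn'] := dens f hf del del0.
set v := Stheta s (Th n).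
set X := Defs.proj K0 v.
have [KX hX] := proj_spec v.
have hU : dotv (v - y) (v - y) <= del * del * A.
  rewrite /A /dotv mulr_sumr; apply: ler_sum => i _.
  rewrite !mxE; case: ifP => hi.
    have := hn' i hi; rewrite ler_norml => /andP[g1 g2].
    rewrite -(hsf i hi) -mulrBr.
    move: g1 g2; set u := _ - f i => g1 g2.
    have uu : u * u <= del * del by nra.
    have -> : s 0 i * u * (s 0 i * u) = (u * u) * (s 0 i * s 0 i) by ring.
    by rewrite ler_wpM2r // -expr2 sqr_ge0.
  have hl := notlast i (negbT hi).
  have -> : y 0 i = 1 by case: Ky => _ /(_ i hl).
  have -> : s 0 i = 1 by case: hs => _ /(_ i hl).
  by rewrite subrr mul0r mulr_ge0 // mulr_ge0 // ltW.
have hV : dotv (v - X) (v - X) <= dotv (v - y) (v - y) := hX y Ky.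
have hW : dotv (y - X) (y - X) <= 4 * (del * del * A).
  have -> : y - X = (v - X) - (v - y) by rewrite opprB [RHS]addrC [RHS]addrA subrK.
  by apply: (le_trans (dotv_tri (v - X) (v - y))); lra.
have hz : dotv z y <= dotv z (y - X).
  rewrite dotvBr; have := hn n; rewrite -/v -/X; lra.
have ham := dotv_amgm z (y - X) l l0.
have : l^-1 * dotv (y - X) (y - X) <= e.
  rewrite -(ler_pM2l l0) mulrA mulfV ?gt_eqF // mul1r.
  apply: (le_trans hW); rewrite mulrC; lra.
rewrite -/Z in ham; lra.
Qed.

End Det.
Section Meas.
Variable R : realType.
Variable dO : measure_display.
Variable Om : measurableType dO.

Lemma polar_sub (Ps : set (probability Om R)) (N N' : set Om) :
  N `<=` N' -> polar Ps N' -> polar Ps N.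
Proof. by move=> s [A [h1 h2 h3]]; exists A; split => //; exact: subset_trans h1. Qed.

Lemma polar_bigcup (Ps : set (probability Om R)) (N : nat -> set Om) :
  (forall n, polar Ps (N n)) -> polar Ps (\bigcup_n N n).
Proof.
move=> hN; have [A hA] := choice hN.
exists (\bigcup_n A n); split.
- by move=> w [n _ Nw]; exists n => //; case: (hA n) => + _ _; apply.
- move=> P.
  have : forall n, exists BC : set Om * set Om,
      [/\ measurable BC.1, measurable BC.2, BC.1 `<=` A n, A n `<=` BC.2
        & P (BC.2 `\` BC.1) = 0%E].
    move=> n; case: (hA n) => _ /(_ P) [B [C h]] _; by exists (B, C).
  move=> /choice [BC hBC].
  exists (\bigcup_n (BC n).1), (\bigcup_n (BC n).2); split.
  + by apply: bigcupT_measurable => n; case: (hBC n).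
  + by apply: bigcupT_measurable => n; case: (hBC n).
  + by move=> w [n _ h]; exists n => //; case: (hBC n) => _ _ + _ _; apply.
  + by move=> w [n _ h]; exists n => //; case: (hBC n) => _ _ _ + _; apply.
  + have neg : P.-negligible (\bigcup_n ((BC n).2 `\` (BC n).1)).
      apply: negligible_bigcup => n; exists ((BC n).2 `\` (BC n).1).
      case: (hBC n) => m1 m2 _ _ h0; split => //; exact: measurableD.
    case: neg => M [mM PM sM].
    apply/eqP; rewrite eq_le measure_ge0 andbT -PM.
    apply: le_measure; rewrite ?inE //.
      apply: measurableD; apply: bigcupT_measurable => n; by case: (hBC n).
    apply: subset_trans sM => w [[n _ h2] h1]; exists n => //; split => //.
    by move=> h; apply: h1; exists n.
- move=> P PP.
  have neg : P.-negligible (\bigcup_n A n).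
    apply: negligible_bigcup => n; case: (hA n) => _ _ /(_ P PP) [C [mC sC PC]].
    by exists C; split.
  by case: neg => M [mM PM sM]; exists M; split.
Qed.

Variables (T d : nat) (c : R).
Let L := Defs.Lspace R T d.

Definition fstf (x : (Om * L)%type) : Om := x.1.
HB.instance Definition _ := isMeasurableFun.Build _ _ _ _ fstf (@measurable_fst _ _ Om L).

Lemma polar_fst (Ps : set (probability Om R)) (N : set Om) :
  polar Ps N -> polar (Pbar T d c Ps) [set wb | N wb.1].
Proof.
move=> [A [sA uA nA]].
exists (A `*` setT); split.
- by move=> wb /= h; split => //; exact: sA.
- move=> Q; have [B [C [mB mC sB sC h0]]] := uA (distribution Q fstf).
  exists (B `*` setT), (C `*` setT); split.
  + exact: measurableX.
  + exact: measurableX.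
  + by move=> x [/= h _]; split => //; exact: sB.
  + by move=> x [/= h _]; split => //; exact: sC.
  + rewrite -h0 /distribution /pushforward; congr (Q _).
    by apply/seteqP; split => x /=; rewrite /fstf; [case=> [[h1 _] h2]; split => // h3; apply: h2|case=> h1 h2; split => // -[]].
- move=> Q [[P PP hQ] _]; have [C [mC sC PC]] := nA P PP.
  exists (C `*` setT); split.
  + exact: measurableX.
  + by move=> x [/= h _]; split => //; exact: sC.
  + by rewrite hQ.
Qed.

Section Sec.
Variable th : L.
Definition pairf (w : Om) : (Om * L)%type := (w, th).
HB.instance Definition _ := isMeasurableFun.Build _ _ _ _ pairf (@pair2_measurable _ _ Om L th).

Lemma pre_meas (B : set (Om * L)%type) : measurable B -> measurable (pairf @^-1` B).
Proof.
move=> mB; have := @pair2_measurable _ _ Om L th measurableT B mB.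
by rewrite setTI.
Qed.

Lemma polar_section (Ps : set (probability Om R)) (N : set (Om * L)%type) :
  Lambda T d c th -> polar (Pbar T d c Ps) N -> polar Ps [set w | N (w, th)].
Proof.
move=> hth [A [sA uA nA]].
exists (pairf @^-1` A); split.
- by move=> w h; exact: sA.
- move=> P; have [B [C [mB mC sB sC h0]]] := uA (distribution P pairf).
  exists (pairf @^-1` B), (pairf @^-1` C); split.
  + exact: pre_meas.
  + exact: pre_meas.
  + by move=> w h; exact: sB.
  + by move=> w h; exact: sC.
  + by rewrite -h0.
- move=> P PP.
  have QP : Pbar T d c Ps (distribution P pairf).
    split.
      exists P => // B mB; rewrite /distribution /pushforward; congr (P _).
      by apply/seteqP; split => w /=; [case|split].
    rewrite /distribution /pushforward /=.
    rewrite -(probability_setT P); congr (P _).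
    by apply/seteqP; split => w //= _; split.
  have [C [mC sC PC]] := nA _ QP.
  exists (pairf @^-1` C); split.
  + exact: pre_meas.
  + by move=> w h; exact: sC.
  + by rewrite -PC.
Qed.
End Sec.

End Meas.
Section Dens.
Variable R : realType.
Variable c : R.
Hypothesis hc : 1 < c.
Variable d : nat.

Definition clampR (r : R) := if r < c^-1 then c^-1 else if c < r then c else r.

Lemma cinv_le : c^-1 <= c.
Proof.
have c0 : 0 < c := lt_trans ltr01 hc.
by apply: (le_trans (y := 1)); [rewrite invf_le1 // ltW | exact: ltW].
Qed.

Lemma clamp_in r : c^-1 <= clampR r <= c.
Proof.
have h := cinv_le; rewrite /clampR; case: ifP => h1; first by rewrite lexx h.
case: ifP => h2; first by rewrite lexx h andbT.
by move: h1 h2 => /negbT; rewrite -leNgt => -> /negbT; rewrite -leNgt => ->.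
Qed.

Lemma clamp_dist r x : c^-1 <= x <= c -> `|clampR r - x| <= `|r - x|.
Proof.
move=> /andP[x1 x2].
have n1 := ler_norm (r - x); have n2 : - (r - x) <= `|r - x| by rewrite -normrN ler_norm.
rewrite /clampR; case: ifP => h1.
  by rewrite ler_norml; apply/andP; split; lra.
case: ifP => h2; last by [].
by rewrite ler_norml; apply/andP; split; lra.
Qed.

Definition qdef : (d.-1).-tuple rat := [tuple 0%R | _ < d.-1].
Definition Theta (n : nat) : (d.-1).-tuple R :=
  [tuple clampR (ratr (tnth (odflt qdef (unpickle n)) j)) | j < d.-1].

Lemma Theta_dens (f : 'I_d -> R) :
  (forall i : 'I_d, (val i < d.-1)%N -> c^-1 <= f i <= c) ->
  forall del, 0 < del -> exists n, forall i : 'I_d, (val i < d.-1)%N ->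
    `|nth 0 (tval (Theta n)) i - f i| <= del.
Proof.
move=> hf del del0.
have : forall j : 'I_(d.-1), exists q : rat,
    ratr q \in `](f (widen_ord (leq_pred d) j)) - del, (f (widen_ord (leq_pred d) j)) + del[.
  move=> j; apply: rat_in_itvoo; lra.
move=> /choice [qf hq].
exists (pickle [tuple qf j | j < d.-1]) => i hi.
have -> : nth 0 (tval (Theta (pickle [tuple qf j | j < d.-1]))) i =
    tnth (Theta (pickle [tuple qf j | j < d.-1])) (Ordinal hi).
  by rewrite (tnth_nth 0).
rewrite tnth_mktuple pickleK /= tnth_mktuple.
have e : widen_ord (leq_pred d) (Ordinal hi) = i by apply: val_inj.
apply: (le_trans (clamp_dist _ _ (hf i hi))).
have := hq (Ordinal hi); rewrite e in_itv /= => /andP[a b].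
rewrite ler_norml; apply/andP; split; lra.
Qed.

End Dens.
Theorem mainTheorem1 (R : realType) (dO : measure_display)
  (Om : measurableType dO) (T d : nat)
  (F0 F : 'I_T.+1 -> set (set Om)) (Ps : set (probability Om R))
  (K : 'I_T.+1 -> Om -> set 'rV[R]_d) (S : 'I_T.+1 -> Om -> 'rV[R]_d) (c : R) :
  (2 <= d)%N ->
  filtration F0 -> filtration F -> (forall t, F0 t `<=` F t) ->
  Ps !=set0 ->
  cone_assumptions F0 K ->
  price_assumptions F0 K S c ->
  (forall (t : 'I_T.+1) (zeta : Om -> 'rV[R]_d), meas_wrt_vec (F t) zeta ->
     (qs Ps (fun w => K t w (- zeta w)) <->
      qs (Pbar T d c Ps)
         (fun wb => dotv (zeta wb.1) (Xproc K S t wb) <= 0)))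
  /\
  (forall eta : 'I_T.+1 -> Om -> 'rV[R]_d, adapted F eta ->
     (admissible Ps K eta <->
      forall t : 'I_T.+1, qs (Pbar T d c Ps)
         (fun wb => dotv (eta t wb.1) (Xproc K S t wb) <= 0))).
Proof.
move=> d2 _ _ _ _ hcone [_ [hS [hc hb]]].
have part1 : forall (t : 'I_T.+1) (zeta : Om -> 'rV[R]_d),
     (qs Ps (fun w => K t w (- zeta w)) <->
      qs (Pbar T d c Ps)
         (fun wb => dotv (zeta wb.1) (Xproc K S t wb) <= 0)).
  move=> t zeta.
  have hK : forall w, [/\ closed (K t w), convex_cone (K t w), @orthant R d `<=` K t w
      & dual_cone (K t w) `&` @orthant_boundary R d = [set 0]].
    by move=> w; have [_ /(_ w) [? ? ? ? _]] := hcone t; split.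
  split.
  - move=> h.
    apply: (@polar_sub R _ _ _ _ _ _ (@polar_fst R dO Om T d c Ps _ h)).
    move=> [w th] /= hn hk; apply: hn; rewrite /Xproc /=.
    have [_ _ hor _] := hK w.
    exact: (@dir1 R d d2 (K t w) (S t w) c hor (proj1 (hS t w)) hc (hb t w) _ _ hk).
  - move=> h.
    set Th := fun n => [tuple (@Theta R c d n) | _ < T.+1] : Defs.Lspace R T d.
    have hL : forall n, Lambda T d c (Th n).
      by move=> n t' i; rewrite /Th !tnth_mktuple; exact: (@clamp_in R c hc).
    have hp := fun n => @polar_section R dO Om T d c (Th n) Ps _ (hL n) h.
    apply: (@polar_sub R _ _ _ _ _ _ (@polar_bigcup R dO Om Ps _ hp)).
    move=> w /= hk; apply: contrapT => hn; apply: hk.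
    have [Kcl Kcc hor hbd] := hK w.
    apply: (@approx_main R d d2 (K t w) (S t w) c Kcl Kcc hor hbd (proj1 (hS t w)) hc (hb t w)
              (zeta w) (@Theta R c d)).
      move=> f hf del del0; have := @Theta_dens R c d f hf del del0.
      exact.
    move=> n; apply: contrapT => hneg; apply: hn; exists n => //=.
    by rewrite /Xproc /= /Th tnth_mktuple.
split; first by move=> t zeta _; exact: part1.
move=> eta _; split => h t; first exact/part1/h.
exact/part1/h.
Qed.
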